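(* The solutions $\phi=\phi(b^2,s)$ of the PDE $\phi_{22}=2(\phi_1-s\phi_{12})$ are given by $$\phi(b^2,s)=f(b^2-s^2)+2s\int_0^s f'(b^2-\sigma^2)\,d\sigma+g(b^2)\,s,$$ where $f$ and $g$ are arbitrary smooth functions.
   Context: $\phi(b^2,s)$ is a smooth function of two variables; $\phi_1$ denotes the partial derivative with respect to the first variable $b^2$ and $\phi_2$ the partial derivative with respect to $s$; similarly $\phi_{12},\phi_{22}$. *)

(* Defs.v *)
From Stdlib Require Import Reals List.
From Coquelicot Require Import Coquelicot.
Open Scope R_scope.

Definition smooth1 (f : R -> R) : Prop :=
  forall (n : nat) (x : R), ex_derive (Derive_n f n) x.

(* Partial derivatives of a function phi(x, s) of two real variables,
   x playing the role of b^2 and s the second variable. *)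
Definition partial1 (phi : R -> R -> R) : R -> R -> R :=
  fun x s => Derive (fun t => phi t s) x.
Definition partial2 (phi : R -> R -> R) : R -> R -> R :=
  fun x s => Derive (fun t => phi x t) s.

Fixpoint iter_partial (l : list bool) (phi : R -> R -> R) : R -> R -> R :=
  match l with
  | nil => phi
  | cons b l' => if b then partial1 (iter_partial l' phi)
               else partial2 (iter_partial l' phi)
  end.

Definition smooth2 (phi : R -> R -> R) : Prop :=
  forall (l : list bool) (x s : R),
    ex_derive (fun t => iter_partial l phi t s) x /\
    ex_derive (fun t => iter_partial l phi x t) s /\
    continuous (fun p : R * R => iter_partial l phi (fst p) (snd p)) (x, s).

Definition phi_1 (phi : R -> R -> R) := partial1 phi.
Definition phi_12 (phi : R -> R -> R) := partial2 (partial1 phi).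
Definition phi_22 (phi : R -> R -> R) := partial2 (partial2 phi).

(* Main.v *)
Require Import Defs.
From Stdlib Require Import Reals Lra List.
From Coquelicot Require Import Coquelicot.
Open Scope R_scope.

Lemma PD1 phi l x s : smooth2 phi ->
  is_derive (fun t => iter_partial l phi t s) x (iter_partial (true::l) phi x s).
Proof. intros H. apply Derive_correct. apply (H l x s). Qed.

Lemma PD2 phi l x s : smooth2 phi ->
  is_derive (fun t => iter_partial l phi x t) s (iter_partial (false::l) phi x s).
Proof. intros H. apply Derive_correct. apply (H l x s). Qed.

Lemma PC phi l x s : smooth2 phi ->
  continuous (fun p : R * R => iter_partial l phi (fst p) (snd p)) (x, s).
Proof. intros H. apply (H l x s). Qed.

Lemma PC2 phi l x s : smooth2 phi -> continuity_2d_pt (iter_partial l phi) x s.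
Proof. intros H. apply continuity_2d_pt_filterlim. apply (H l x s). Qed.

Lemma sym phi l x s : smooth2 phi ->
  iter_partial (true::false::l) phi x s = iter_partial (false::true::l) phi x s.
Proof.
  intros H.
  pose proof (Schwarz (iter_partial l phi) x s) as S.
  simpl in S |- *. unfold partial1, partial2. apply S.
  - exists (mkposreal 1 Rlt_0_1). intros u v _ _.
    split; [apply (H l u v)|]. split; [apply (H l u v)|].
    split; [apply (H (false::l) u v)| apply (H (true::l) u v)].
  - apply (PC2 phi (true::false::l)); auto.
  - apply (PC2 phi (false::true::l)); auto.
Qed.

Lemma const_deriv (h d : R -> R) a b :
  (forall t, is_derive h t (d t)) -> (forall t, d t = 0) -> h a = h b.
Proof.
  intros Hd Hz.
  destruct (MVT_gen h a b d) as [c [_ Hc]].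
  - intros; auto.
  - intros x _. apply continuity_pt_filterlim.
    apply (ex_derive_continuous (K := R_AbsRing) (V := R_NormedModule) h).
    eexists; apply Hd.
  - rewrite Hz in Hc. lra.
Qed.

Lemma S0 f y : smooth1 f -> is_derive f y (Derive f y).
Proof. intros H. apply Derive_correct. apply (H 0%nat y). Qed.

Lemma S1 f y : smooth1 f -> is_derive (Derive f) y (Derive (Derive f) y).
Proof. intros H. apply Derive_correct. apply (H 1%nat y). Qed.

Definition Fi f x s := RInt (fun sigma => Derive f (x - sigma ^ 2)) 0 s.

Lemma kder f x z : smooth1 f ->
  is_derive (fun sigma => Derive f (x - sigma ^ 2)) z
     (Derive (Derive f) (x - z^2) * (- (2 * z))).
Proof.
  intros H.
  pose proof (S1 f (x - z^2) H) as H1.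
  apply is_derive_Reals in H1. apply is_derive_Reals.
  apply (derivable_pt_lim_comp (fun s => x - s^2) (Derive f)); auto.
  replace (-(2*z)) with (0 - 2 * z) by ring.
  apply derivable_pt_lim_minus. apply derivable_pt_lim_const.
  replace (2 * z) with (INR 2 * z ^ (2 - 1)) by (simpl; ring).
  apply derivable_pt_lim_pow.
Qed.

Lemma kcont f x z : smooth1 f -> continuous (fun sigma => Derive f (x - sigma ^ 2)) z.
Proof.
  intros H. apply (ex_derive_continuous (K := R_AbsRing) (V := R_NormedModule)).
  eexists. apply kder; auto.
Qed.

Lemma Fder f x s : smooth1 f -> is_derive (Fi f x) s (Derive f (x - s ^ 2)).
Proof.
  intros H. unfold Fi.
  apply (is_derive_RInt (fun sigma => Derive f (x - sigma ^ 2)) _ 0).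
  - exists (mkposreal 1 Rlt_0_1). intros b _. apply (RInt_correct (V := R_CompleteNormedModule)).
    apply (ex_RInt_continuous (V := R_CompleteNormedModule)). intros; apply kcont; auto.
  - apply kcont; auto.
Qed.

Lemma Rder f x c s : smooth1 f ->
  is_derive (fun s => f (x - s^2) + 2 * s * Fi f x s + c * s) s (2 * Fi f x s + c).
Proof.
  intros H.
  pose proof (Fder f x s H) as HF. apply is_derive_Reals in HF.
  pose proof (S0 f (x - s^2) H) as H0. apply is_derive_Reals in H0.
  apply is_derive_Reals.
  replace (2 * Fi f x s + c) with
    ((Derive f (x - s^2) * (0 - INR 2 * s^(2-1)))
     + ((0 * s + 2 * 1) * Fi f x s + (2 * s) * Derive f (x - s^2))
     + (0 * s + c * 1)) by (simpl; ring).
  apply derivable_pt_lim_plus. apply derivable_pt_lim_plus.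
  - apply (derivable_pt_lim_comp (fun s => x - s^2) f); auto.
    apply derivable_pt_lim_minus. apply derivable_pt_lim_const.
    apply derivable_pt_lim_pow.
  - apply derivable_pt_lim_mult; auto.
    apply derivable_pt_lim_mult. apply derivable_pt_lim_const. apply derivable_pt_lim_id.
  - apply derivable_pt_lim_mult. apply derivable_pt_lim_const. apply derivable_pt_lim_id.
Qed.

Lemma Eder f x c s : smooth1 f ->
  is_derive (fun s => 2 * Fi f x s + c) s (2 * Derive f (x - s^2)).
Proof.
  intros H.
  pose proof (Fder f x s H) as HF. apply is_derive_Reals in HF.
  apply is_derive_Reals.
  replace (2 * Derive f (x - s^2)) with ((0 * Fi f x s + 2 * Derive f (x - s^2)) + 0) by ring.
  apply derivable_pt_lim_plus. apply derivable_pt_lim_mult; auto.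
  apply derivable_pt_lim_const. apply derivable_pt_lim_const.
Qed.

Lemma fcomp_der f x s : smooth1 f ->
  is_derive (fun t => f (x - t^2)) s (Derive f (x - s^2) * (- (2 * s))).
Proof.
  intros H. pose proof (S0 f (x - s^2) H) as H0. apply is_derive_Reals in H0.
  apply is_derive_Reals.
  apply (derivable_pt_lim_comp (fun s => x - s^2) f); auto.
  replace (-(2*s)) with (0 - INR 2 * s^(2-1)) by (simpl; ring).
  apply derivable_pt_lim_minus. apply derivable_pt_lim_const.
  apply derivable_pt_lim_pow.
Qed.

Lemma diff_partials (Q Q1 Q2 : R -> R -> R) x y :
  (forall u v, is_derive (fun t => Q t v) u (Q1 u v)) ->
  (forall u v, is_derive (fun t => Q u t) v (Q2 u v)) ->
  continuity_2d_pt Q1 x y ->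
  differentiable_pt_lim Q x y (Q1 x y) (Q2 x y).
Proof.
  intros HD1 HD2 HC eps.
  assert (He2 : 0 < eps / 2) by (destruct eps; simpl; lra).
  destruct (HC (mkposreal _ He2)) as [d1 Hd1].
  pose proof (HD2 x y) as H2. apply is_derive_Reals in H2.
  destruct (H2 (eps/2) He2) as [d2 Hd2].
  assert (Hd : 0 < Rmin d1 d2) by (apply Rmin_pos; [destruct d1|destruct d2]; auto).
  exists (mkposreal _ Hd). simpl. intros u v Hu Hv.
  assert (Hu1 : Rabs (u - x) < d1) by (eapply Rlt_le_trans; [apply Hu| apply Rmin_l]).
  assert (Hv1 : Rabs (v - y) < d1) by (eapply Rlt_le_trans; [apply Hv| apply Rmin_l]).
  assert (Hv2 : Rabs (v - y) < d2) by (eapply Rlt_le_trans; [apply Hv| apply Rmin_r]).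
  destruct (MVT_gen (fun t => Q t v) x u (fun t => Q1 t v)) as [c [Hc HA]].
  { intros; auto. }
  { intros z _. apply continuity_pt_filterlim.
    apply (ex_derive_continuous (K := R_AbsRing) (V := R_NormedModule) (fun t => Q t v)).
    eexists; apply HD1. }
  simpl in HA.
  assert (Hcx : Rabs (c - x) <= Rabs (u - x)).
  { unfold Rabs; destruct Hc as [Hc1 Hc2];
    unfold Rmin, Rmax in *; repeat destruct Rcase_abs; repeat destruct Rle_dec; lra. }
  assert (HQ1 : Rabs (Q1 c v - Q1 x y) < eps / 2).
  { apply (Hd1 c v); lra. }
  assert (HA' : Rabs (Q u v - Q x v - Q1 x y * (u - x)) <= eps / 2 * Rabs (u - x)).
  { rewrite HA. replace (Q1 c v * (u - x) - Q1 x y * (u - x)) with ((Q1 c v - Q1 x y) * (u - x)) by ring.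
    rewrite Rabs_mult. apply Rmult_le_compat_r. apply Rabs_pos. lra. }
  assert (HB' : Rabs (Q x v - Q x y - Q2 x y * (v - y)) <= eps / 2 * Rabs (v - y)).
  { destruct (Req_dec v y) as [E|E].
    - subst. replace (Q x y - Q x y - Q2 x y * (y - y)) with 0 by ring.
      rewrite Rabs_R0. replace (y - y) with 0 by ring. rewrite Rabs_R0. lra.
    - assert (Hh : v - y <> 0) by lra.
      pose proof (Hd2 (v - y) Hh Hv2) as K.
      replace (y + (v - y)) with v in K by ring.
      replace (Q x v - Q x y - Q2 x y * (v - y)) with
        (((Q x v - Q x y) / (v - y) - Q2 x y) * (v - y)) by (field; auto).
      rewrite Rabs_mult. apply Rmult_le_compat_r. apply Rabs_pos. lra. }
  replace (Q u v - Q x y - (Q1 x y * (u - x) + Q2 x y * (v - y))) with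
    ((Q u v - Q x v - Q1 x y * (u - x)) + (Q x v - Q x y - Q2 x y * (v - y))) by ring.
  eapply Rle_trans. apply Rabs_triang.
  assert (Rabs (u - x) <= Rmax (Rabs (u - x)) (Rabs (v - y))) by apply Rmax_l.
  assert (Rabs (v - y) <= Rmax (Rabs (u - x)) (Rabs (v - y))) by apply Rmax_r.
  assert (0 < eps) by (destruct eps; auto).
  nra.
Qed.

Lemma slice phi l : smooth2 phi -> smooth1 (fun y => iter_partial l phi y 0).
Proof.
  intros H.
  assert (E : forall n y, Derive_n (fun y => iter_partial l phi y 0) n y
                = iter_partial (repeat true n ++ l) phi y 0).
  { induction n; intros y; simpl; auto.
    apply Derive_ext. exact IHn. }
  intros n y. eapply ex_derive_ext.
  { intros t. symmetry. apply E. }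
  apply (H (repeat true n ++ l) y 0).
Qed.

Lemma dminus (a b : R -> R) x da db : is_derive a x da -> is_derive b x db ->
  is_derive (fun t => a t - b t) x (da - db).
Proof.
  intros Ha Hb. apply is_derive_Reals in Ha. apply is_derive_Reals in Hb.
  apply is_derive_Reals. apply derivable_pt_lim_minus; auto.
Qed.

Lemma dconstmul (b : R -> R) c x db : is_derive b x db ->
  is_derive (fun t => c * b t) x (c * db).
Proof.
  intros Hb. apply is_derive_Reals in Hb.
  apply is_derive_Reals. replace (c * db) with (0 * b x + c * db) by ring.
  apply derivable_pt_lim_mult; auto. apply derivable_pt_lim_const.
Qed.

Lemma didmul (b : R -> R) x db : is_derive b x db ->
  is_derive (fun t => t * b t) x (b x + x * db).
Proof.
  intros Hb. apply is_derive_Reals in Hb.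
  apply is_derive_Reals. replace (b x + x * db) with (1 * b x + x * db) by ring.
  apply derivable_pt_lim_mult; auto. apply derivable_pt_lim_id.
Qed.

Lemma is_derive_eq (h : R -> R) x l l' : is_derive h x l -> l = l' -> is_derive h x l'.
Proof. intros H E; subst; auto. Qed.

Theorem lemma5p1 :
  forall phi : R -> R -> R,
    smooth2 phi ->
    ((forall x s : R,
        phi_22 phi x s = 2 * (phi_1 phi x s - s * phi_12 phi x s))
     <->
     (exists f g : R -> R,
        smooth1 f /\ smooth1 g /\
        forall x s : R,
          phi x s = f (x - s ^ 2)
                    + 2 * s * RInt (fun sigma => Derive f (x - sigma ^ 2)) 0 s
                    + g x * s)).
Proof.
  intros phi Hs. split.
  - intros PDE.
    set (f := fun y => phi y 0).
    assert (Hf : smooth1 f) by apply (slice phi nil Hs).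
    exists f, (fun y => iter_partial (false::nil) phi y 0).
    split; [exact Hf|]. split; [apply (slice phi (false::nil) Hs)|].
    assert (HQ : forall x s, phi x s - s * iter_partial (false::nil) phi x s = f (x - s^2)).
    { intros x s.
      set (Q := fun u v => phi u v - v * iter_partial (false::nil) phi u v).
      set (Q1 := fun u v => iter_partial (true::nil) phi u v
                          - v * iter_partial (true::false::nil) phi u v).
      set (Q2 := fun u v => - (v * iter_partial (false::false::nil) phi u v)).
      assert (D1 : forall u v, is_derive (fun t => Q t v) u (Q1 u v)).
      { intros u v. unfold Q, Q1. apply dminus. apply (PD1 phi nil); auto.
        apply dconstmul. apply (PD1 phi (false::nil)); auto. }
      assert (D2 : forall u v, is_derive (fun t => Q u t) v (Q2 u v)).
      { intros u v. unfold Q, Q2.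
        eapply is_derive_eq.
        apply dminus. apply (PD2 phi nil); auto.
        apply didmul. apply (PD2 phi (false::nil)); auto.
        simpl. ring. }
      assert (C1 : forall u v, continuity_2d_pt Q1 u v).
      { intros u v. unfold Q1. apply continuity_2d_pt_minus.
        apply (PC2 phi (true::nil)); auto.
        apply continuity_2d_pt_mult. apply continuity_2d_pt_id2.
        apply (PC2 phi (true::false::nil)); auto. }
      assert (Dh : forall t, is_derive (fun t => Q (x - s^2 + t^2) t) t 0).
      { intros t. apply is_derive_Reals.
        assert (Ha : derivable_pt_lim (fun t => x - s^2 + t^2) t (2 * t)).
        { replace (2 * t) with (0 + INR 2 * t^(2-1)) by (simpl; ring).
          apply derivable_pt_lim_plus. apply derivable_pt_lim_const.
          apply derivable_pt_lim_pow. }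
        pose proof (derivable_pt_lim_comp_2d Q (fun t => x - s^2 + t^2) (fun t => t) t
                      _ _ (2 * t) 1
                      (diff_partials Q Q1 Q2 _ _ D1 D2 (C1 _ _)) Ha
                      (derivable_pt_lim_id t)) as K.
        replace 0 with (Q1 (x - s^2 + t^2) t * (2 * t) + Q2 (x - s^2 + t^2) t * 1).
        exact K.
        pose proof (PDE (x - s^2 + t^2) t) as P.
        pose proof (sym phi nil (x - s^2 + t^2) t Hs) as Sy.
        unfold phi_22, phi_1, phi_12 in P. cbn [iter_partial] in Sy.
        unfold Q1, Q2; cbn [iter_partial]. rewrite Sy, P. ring. }
      pose proof (const_deriv _ (fun _ => 0) s 0 Dh (fun _ => eq_refl)) as K.
      cbv beta in K. replace (x - s^2 + s^2) with x in K by ring.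
      replace (x - s^2 + 0 ^ 2) with (x - s^2) in K by ring.
      unfold Q in K. rewrite K. unfold f. try ring. }
    assert (E22 : forall x s, iter_partial (false::false::nil) phi x s = 2 * Derive f (x - s^2)).
    { intros x s. destruct (Req_dec s 0) as [Z|Z].
      - subst s. pose proof (PDE x 0) as P. unfold phi_22, phi_1, phi_12 in P.
        cbn [iter_partial]. rewrite P.
        replace (x - 0^2) with x by ring. unfold f, partial1. ring.
      - assert (A1 : Derive (fun t => phi x t - t * iter_partial (false::nil) phi x t) s
                     = - (s * iter_partial (false::false::nil) phi x s)).
        { apply is_derive_unique. eapply is_derive_eq.
          apply dminus. apply (PD2 phi nil); auto.
          apply didmul. apply (PD2 phi (false::nil)); auto.
          simpl. ring. }
        assert (A2 : Derive (fun t => phi x t - t * iter_partial (false::nil) phi x t) s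
                     = Derive f (x - s^2) * (- (2 * s))).
        { rewrite (Derive_ext _ (fun t => f (x - t^2))) by (intros; apply HQ).
          apply is_derive_unique. apply fcomp_der; auto. }
        rewrite A1 in A2.
        apply (Rmult_eq_reg_l s); auto. lra. }
    intros x s.
    set (c := iter_partial (false::nil) phi x 0).
    change (RInt (fun sigma => Derive f (x - sigma ^ 2)) 0 s) with (Fi f x s).
    assert (EE : forall t, iter_partial (false::nil) phi x t - (2 * Fi f x t + c) = 0).
    { intros t.
      assert (K : forall a b,
        (fun t => iter_partial (false::nil) phi x t - (2 * Fi f x t + c)) a =
        (fun t => iter_partial (false::nil) phi x t - (2 * Fi f x t + c)) b).
      { intros a b. apply (const_deriv (fun t => iter_partial (false::nil) phi x t - (2 * Fi f x t + c)) (fun t => iter_partial (false::false::nil) phi x t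
                                     - 2 * Derive f (x - t^2))).
        - intros z. apply dminus. apply (PD2 phi (false::nil)); auto. apply Eder; auto.
        - intros z. rewrite E22. ring. }
      rewrite (K t 0). cbv beta. unfold Fi. rewrite RInt_point. unfold c, zero; simpl. ring. }
    assert (K : forall a b,
        (fun t => phi x t - (f (x - t^2) + 2 * t * Fi f x t + c * t)) a =
        (fun t => phi x t - (f (x - t^2) + 2 * t * Fi f x t + c * t)) b).
    { intros a b. apply (const_deriv (fun t => phi x t - (f (x - t^2) + 2 * t * Fi f x t + c * t)) (fun t => iter_partial (false::nil) phi x t
                                     - (2 * Fi f x t + c))).
      - intros z. apply dminus. apply (PD2 phi nil); auto. apply Rder; auto.
      - exact EE. }
    pose proof (K s 0) as K0. cbv beta in K0.
    replace (x - 0^2) with x in K0 by ring. unfold f in K0 |- *. lra.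
  - intros [f [g [Hf [Hg Hphi]]]].
    assert (Hphi' : forall x s, phi x s = f (x - s^2) + 2 * s * Fi f x s + g x * s)
      by (intros; apply Hphi).
    assert (E2 : forall x s, iter_partial (false::nil) phi x s = 2 * Fi f x s + g x).
    { intros x s. cbn [iter_partial]. unfold partial2.
      rewrite (Derive_ext _ (fun t => f (x - t^2) + 2 * t * Fi f x t + g x * t))
        by (intros; apply Hphi').
      apply is_derive_unique. apply Rder; auto. }
    assert (E22 : forall x s, iter_partial (false::false::nil) phi x s = 2 * Derive f (x - s^2)).
    { intros x s. cbn [iter_partial]. unfold partial2 at 1.
      rewrite (Derive_ext _ (fun t => 2 * Fi f x t + g x)) by (intros; apply E2).
      apply is_derive_unique. apply Eder; auto. }
    assert (HQ : forall x s, phi x s - s * iter_partial (false::nil) phi x s = f (x - s^2)).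
    { intros x s. rewrite Hphi', E2. ring. }
    assert (E1 : forall x s, iter_partial (true::nil) phi x s
                  - s * iter_partial (true::false::nil) phi x s = Derive f (x - s^2)).
    { intros x s.
      assert (A1 : Derive (fun t => phi t s - s * iter_partial (false::nil) phi t s) x
                   = iter_partial (true::nil) phi x s
                     - s * iter_partial (true::false::nil) phi x s).
      { apply is_derive_unique. apply dminus. apply (PD1 phi nil); auto.
        apply dconstmul. apply (PD1 phi (false::nil)); auto. }
      rewrite <- A1.
      rewrite (Derive_ext _ (fun t => f (t - s^2))) by (intros; apply HQ).
      apply is_derive_unique.
      pose proof (S0 f (x - s^2) Hf) as H0. apply is_derive_Reals in H0.
      apply is_derive_Reals.
      replace (Derive f (x - s^2)) with (Derive f (x - s^2) * (1 - 0)) by ring.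
      apply (derivable_pt_lim_comp (fun t => t - s^2) f); auto.
      apply derivable_pt_lim_minus. apply derivable_pt_lim_id. apply derivable_pt_lim_const. }
    intros x s.
    pose proof (sym phi nil x s Hs) as Sy. cbn [iter_partial] in Sy.
    unfold phi_22, phi_1, phi_12.
    pose proof (E22 x s) as A. pose proof (E1 x s) as B.
    cbn [iter_partial] in A, B. rewrite A, <- Sy, <- B. ring.
Qed.
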